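(* Let $U$ be an infinite uniquely $2$-divisible group, $\nu$ an involutory almost regular automorphism of $U$, and $S=\{x\in U\mid x^\nu=x^{-1}\}$. Let $D$ be an abelian subgroup of $U$ (possibly $D=1$) which is inverted by $\nu$ and such that $C_U(D)$ is infinite, and assume $(S\cap C_U(D))\setminus D\neq\emptyset$. Then: (1) there exists an element $w\in C_U(D)\setminus D$ which is inverted by $\nu$ and such that $C_U(\langle D,w\rangle)$ is infinite; (2) there exists an infinite abelian subgroup of $U$ which is inverted by $\nu$.
   Context: An automorphism $\nu$ is involutory if $\nu\ne\mathrm{id}$ and $\nu^2=\mathrm{id}$, and almost regular if $C_U(\nu)$ is finite. A group is uniquely $2$-divisible if every element has a unique square root. A subgroup is inverted by $\nu$ if each of its elements $x$ satisfies $x^\nu=x^{-1}$. *)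

(* Defs.v *)
From Stdlib Require Import List.

Record Group := {
  carrier :> Type;
  mul : carrier -> carrier -> carrier;
  inv : carrier -> carrier;
  one : carrier;
  mulA : forall x y z, mul x (mul y z) = mul (mul x y) z;
  mul1g : forall x, mul one x = x;
  mulg1 : forall x, mul x one = x;
  mulVg : forall x, mul (inv x) x = one;
  mulgV : forall x, mul x (inv x) = one
}.

Section Defs.
Variable U : Group.

Definition finite_set (A : U -> Prop) : Prop :=
  exists l : list U, forall x, A x -> In x l.
Definition infinite_set (A : U -> Prop) : Prop := ~ finite_set A.

Definition infinite_group : Prop := infinite_set (fun _ => True).

Definition is_subgroup (H : U -> Prop) : Prop :=
  H (one U) /\ (forall x y, H x -> H y -> H (mul U x y)) /\
  (forall x, H x -> H (inv U x)).

Definition is_abelian (H : U -> Prop) : Prop :=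
  forall x y, H x -> H y -> mul U x y = mul U y x.

Definition uniquely_2_divisible : Prop :=
  forall x : U, exists y, mul U y y = x /\ forall z, mul U z z = x -> z = y.

Definition is_automorphism (nu : U -> U) : Prop :=
  (forall x y, nu (mul U x y) = mul U (nu x) (nu y)) /\
  (forall x y, nu x = nu y -> x = y) /\
  (forall y, exists x, nu x = y).

Definition involutory (nu : U -> U) : Prop :=
  (exists x, nu x <> x) /\ (forall x, nu (nu x) = x).

Definition fixed_points (nu : U -> U) : U -> Prop := fun x => nu x = x.

Definition almost_regular (nu : U -> U) : Prop := finite_set (fixed_points nu).

Definition centralizer (A : U -> Prop) : U -> Prop :=
  fun x => forall a, A a -> mul U x a = mul U a x.

Definition generated (A : U -> Prop) : U -> Prop :=
  fun x => forall H, is_subgroup H -> (forall a, A a -> H a) -> H x.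

Definition inverted_by (nu : U -> U) (H : U -> Prop) : Prop :=
  forall x, H x -> nu x = inv U x.

End Defs.

(* Main.v *)
Require Import Defs.
From Stdlib Require Import List Classical ClassicalEpsilon Lia Arith FinFun.
Import ListNotations.

Notation "x ** y" := (mul _ x y) (at level 40, left associativity).
Notation "x ^-1" := (inv _ x) (at level 3, format "x ^-1").
Notation "1" := (one _).


Lemma mulKg (U : Group) (x y : U) : x^-1 ** (x ** y) = y.
Proof. rewrite mulA, mulVg, mul1g. reflexivity. Qed.
Lemma mulKVg (U : Group) (x y : U) : x ** (x^-1 ** y) = y.
Proof. rewrite mulA, mulgV, mul1g. reflexivity. Qed.
Lemma mulgK (U : Group) (x y : U) : (y ** x) ** x^-1 = y.
Proof. rewrite <- mulA, mulgV, mulg1. reflexivity. Qed.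
Lemma mulgKV (U : Group) (x y : U) : (y ** x^-1) ** x = y.
Proof. rewrite <- mulA, mulVg, mulg1. reflexivity. Qed.
Lemma mulg_injl (U : Group) (x y z : U) : x ** y = x ** z -> y = z.
Proof. intro H. rewrite <- (mulKg U x y), H, mulKg. reflexivity. Qed.
Lemma mulg_injr (U : Group) (x y z : U) : y ** x = z ** x -> y = z.
Proof. intro H. rewrite <- (mulgK U x y), H, mulgK. reflexivity. Qed.
Lemma inv_uniq (U : Group) (x y : U) : x ** y = 1 -> y = x^-1.
Proof. intro H. apply (mulg_injl U x). rewrite H, mulgV. reflexivity. Qed.
Lemma invgK (U : Group) (x : U) : (x^-1)^-1 = x.
Proof. symmetry. apply inv_uniq. apply mulVg. Qed.
Lemma invMg (U : Group) (x y : U) : (x ** y)^-1 = y^-1 ** x^-1.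
Proof. symmetry. apply inv_uniq. rewrite mulA, <- (mulA _ x), mulgV, mulg1, mulgV. reflexivity. Qed.
Lemma invg1 (U : Group) : (one U)^-1 = 1.
Proof. symmetry. apply inv_uniq. apply mul1g. Qed.
Lemma invg_inj (U : Group) (x y : U) : x^-1 = y^-1 -> x = y.
Proof. intro H. rewrite <- (invgK U x), H, invgK. reflexivity. Qed.

Lemma nu1 (U : Group) nu : is_automorphism U nu -> nu 1 = 1.
Proof. intros [Hm _]. apply (mulg_injl U (nu 1)). rewrite <- Hm, !mulg1. reflexivity. Qed.
Lemma nuV (U : Group) nu (x : U) : is_automorphism U nu -> nu (x^-1) = (nu x)^-1.
Proof. intro Ha. apply inv_uniq. destruct Ha as [Hm Hr]. rewrite <- Hm, mulgV. apply nu1. split; assumption. Qed.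

Definition u2d_uniq (U : Group) (a b : U) : uniquely_2_divisible U -> a ** a = b ** b -> a = b.
Proof. intros H E. destruct (H (a ** a)) as [y [_ Hy]]. rewrite (Hy a eq_refl), (Hy b (eq_sym E)). reflexivity. Qed.

Lemma comm_sqrt (U : Group) (y r : U) : uniquely_2_divisible U ->
  y ** (r ** r) = (r ** r) ** y -> y ** r = r ** y.
Proof.
  intros H2 E. assert (y^-1 ** r ** y = r).
  { apply u2d_uniq; auto.
    replace (y^-1 ** r ** y ** (y^-1 ** r ** y)) with (y^-1 ** (r ** r) ** y).
    - rewrite <- (mulA _ (y^-1)), <- E, mulKg. reflexivity.
    - rewrite !mulA, mulgK. reflexivity. }
  rewrite <- H at 1. rewrite !mulA, mulgV, mul1g. reflexivity.
Qed.

Lemma sqrt_inv (U : Group) nu (r : U) : is_automorphism U nu -> uniquely_2_divisible U ->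
  nu (r ** r) = (r ** r)^-1 -> nu r = r^-1.
Proof.
  intros Ha H2 E. apply u2d_uniq; auto. destruct Ha as [Hm _]. rewrite <- Hm, E, invMg. reflexivity.
Qed.

Lemma fin_sub (U : Group) (A B : U -> Prop) : (forall x, A x -> B x) -> finite_set U B -> finite_set U A.
Proof. intros H [l Hl]. exists l. auto. Qed.
Lemma inf_sup (U : Group) (A B : U -> Prop) : (forall x, A x -> B x) -> infinite_set U A -> infinite_set U B.
Proof. intros H HA HB. apply HA. eapply fin_sub; eauto. Qed.
Lemma inf_diff (U : Group) (A B : U -> Prop) : infinite_set U A -> finite_set U B -> exists x, A x /\ ~ B x.
Proof.
  intros HA HB. apply NNPP. intro N. apply HA. eapply fin_sub; [|exact HB].
  intros x Ax. apply NNPP. intro Bx. apply N. eauto.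
Qed.
Lemma fin_prod (U : Group) (A B : U -> Prop) : finite_set U A -> finite_set U B ->
  finite_set U (fun y => exists a b, A a /\ B b /\ y = a ** b).
Proof.
  intros [la Ha] [lb Hb]. exists (flat_map (fun a => map (mul U a) lb) la).
  intros y (a & b & Aa & Bb & ->). apply in_flat_map. exists a. split; auto.
  apply in_map. auto.
Qed.
Lemma inf_image (U : Group) (A B : U -> Prop) (f g : U -> U) :
  infinite_set U A -> (forall x, A x -> B (f x)) -> (forall x, g (f x) = x) -> infinite_set U B.
Proof.
  intros HA Hf Hg [l Hl]. apply HA. exists (map g l). intros x Ax.
  rewrite <- (Hg x). apply in_map. auto.
Qed.
Lemma pigeon (U : Group) (l : list U) (P : U -> U -> Prop) (A : U -> Prop) :
  infinite_set U A -> (forall x, A x -> exists c, In c l /\ P c x) ->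
  exists c, In c l /\ infinite_set U (fun x => A x /\ P c x).
Proof.
  revert A. induction l as [|a l IH]; intros A HA HP.
  - exfalso. apply HA. exists nil. intros x Ax. destruct (HP x Ax) as [c [[] _]].
  - destruct (classic (infinite_set U (fun x => A x /\ P a x))) as [Hi|Hf].
    + exists a. split; [left|]; auto.
    + apply NNPP in Hf. destruct Hf as [la Hla].
      destruct (IH (fun x => A x /\ ~ In x la)) as [c [Hc Hinf]].
      * intros [l2 Hl2]. apply HA. exists (la ++ l2). intros x Ax.
        apply in_or_app. destruct (classic (In x la)); auto.
      * intros x [Ax Nx]. destruct (HP x Ax) as [c [[<-|Hc] Pc]].
        -- exfalso. auto.
        -- eauto.
      * exists c. split; [right; auto|]. eapply inf_sup; [|exact Hinf]. simpl. tauto.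
Qed.

Lemma gen_incl (U : Group) (A : U -> Prop) a : A a -> generated U A a.
Proof. intros Ha H _ HA. auto. Qed.
Lemma gen_min (U : Group) (A H : U -> Prop) x : is_subgroup U H -> (forall a, A a -> H a) -> generated U A x -> H x.
Proof. intros HH HA Hx. apply Hx; auto. Qed.
Lemma gen_subgroup (U : Group) (A : U -> Prop) : is_subgroup U (generated U A).
Proof.
  split; [|split].
  - intros H [H1 _] _. auto.
  - intros x y Hx Hy H HH HA. pose proof HH as [_ [HM _]]. apply HM; [apply Hx|apply Hy]; auto.
  - intros x Hx H HH HA. pose proof HH as [_ [_ HV]]. apply HV. apply Hx; auto.
Qed.
Lemma comm_subgroup (U : Group) (y : U) : is_subgroup U (fun z => y ** z = z ** y).
Proof.
  split; [|split].
  - rewrite mulg1, mul1g. reflexivity.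
  - intros a b Ha Hb. rewrite mulA, Ha, <- mulA, Hb, mulA. reflexivity.
  - intros a Ha. transitivity (a^-1 ** (a ** y) ** a^-1). { rewrite mulKg. reflexivity. }
    rewrite <- Ha, mulA, mulgK. reflexivity.
Qed.
Lemma cent_gen (U : Group) (A : U -> Prop) (y z : U) :
  (forall a, A a -> y ** a = a ** y) -> generated U A z -> y ** z = z ** y.
Proof. intros HA Hz. apply (gen_min U A (fun z => y ** z = z ** y)); auto. apply comm_subgroup. Qed.
Lemma cent_gen' (U : Group) (A : U -> Prop) (y : U) :
  (forall a, A a -> y ** a = a ** y) -> centralizer U (generated U A) y.
Proof. intros HA z Hz. apply (cent_gen U A); auto. Qed.
Lemma gen_abelian (U : Group) (A : U -> Prop) :
  (forall a b, A a -> A b -> a ** b = b ** a) -> is_abelian U (generated U A).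
Proof.
  intros HA x y Hx Hy.
  assert (Hx' : forall a, A a -> a ** x = x ** a).
  { intros a Ha. apply (cent_gen U A); auto. }
  apply (cent_gen U A); auto. intros a Ha. symmetry. auto.
Qed.
Lemma gen_inverted (U : Group) nu (A : U -> Prop) : is_automorphism U nu ->
  (forall a b, A a -> A b -> a ** b = b ** a) -> inverted_by U nu A -> inverted_by U nu (generated U A).
Proof.
  intros Ha HA Hi x Hx.
  assert (Hab := gen_abelian U A HA).
  apply (gen_min U A (fun z => generated U A z /\ nu z = z^-1)) in Hx.
  - tauto.
  - split; [|split].
    + split. apply gen_subgroup. rewrite nu1, invg1; auto.
    + intros a b [Ga Na] [Gb Nb]. split. apply gen_subgroup; auto.
      destruct Ha as [Hm _]. rewrite Hm, Na, Nb, <- invMg, (Hab a b); auto.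
    + intros a [Ga Na]. split. apply gen_subgroup; auto. rewrite nuV, Na; auto.
  - intros a Aa. split. apply gen_incl; auto. apply Hi; auto.
Qed.

Definition good (U : Group) (nu : U -> U) (D H : U -> Prop) : Prop :=
  is_subgroup U H /\ (forall y, H y -> centralizer U D y) /\ (forall y, H y -> H (nu y)) /\
  (forall r, H (r ** r) -> H r) /\ infinite_set U H.

Lemma decomp (U : Group) nu (H : U -> Prop) y : is_automorphism U nu -> (forall x, nu (nu x) = x) ->
  uniquely_2_divisible U -> is_subgroup U H -> (forall y, H y -> H (nu y)) ->
  (forall r, H (r ** r) -> H r) -> H y ->
  exists c u, nu c = c /\ nu u = u^-1 /\ y = c ** u /\ H c /\ H u.
Proof.
  intros Ha Hnn H2 [H1 [HM HV]] Hn Hr Hy.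
  set (q := (nu y)^-1 ** y).
  destruct (H2 q) as [u [Hu _]].
  assert (Nq : nu q = q^-1).
  { unfold q. pose proof Ha as [Hm _]. rewrite Hm, nuV, Hnn, invMg, invgK; auto. }
  assert (Nu : nu u = u^-1). { apply (sqrt_inv U nu); auto. rewrite Hu. auto. }
  assert (Hq : H q). { unfold q. auto. }
  assert (Hu' : H u). { apply Hr. rewrite Hu. auto. }
  exists (y ** u^-1), u. split; [|split; [auto|split; [|split; auto]]].
  - pose proof Ha as [Hm _]. rewrite Hm, nuV, Nu, invgK; auto.
    apply (mulg_injr U u). rewrite mulgKV, <- mulA, Hu. unfold q. rewrite mulKVg. reflexivity.
  - rewrite mulgKV. reflexivity.
Qed.

Lemma S_inf (U : Group) nu D H : is_automorphism U nu -> (forall x, nu (nu x) = x) ->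
  uniquely_2_divisible U -> almost_regular U nu -> good U nu D H ->
  infinite_set U (fun u => H u /\ nu u = u^-1).
Proof.
  intros Ha Hnn H2 Har (HH & _ & Hn & Hr & Hinf) Hfin.
  apply Hinf. eapply fin_sub; [|apply (fin_prod U _ _ Har Hfin)].
  intros y Hy. destruct (decomp U nu H y) as (c & u & Nc & Nu & -> & Hc & Hu); auto.
  exists c, u. unfold fixed_points. auto.
Qed.

Ltac gnorm := repeat progress rewrite ?invMg, ?invgK, ?invg1, ?mulA, ?mulgV, ?mulVg, ?mulg1, ?mul1g, ?mulgK, ?mulgKV.

Lemma remove_one (U : Group) (f : U) (L : list U) : In f L ->
  exists L', length L' < length L /\ forall y, In y L -> y <> f -> In y L'.
Proof.
  induction L as [|a L IH]; intros Hf; [destruct Hf|].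
  destruct (classic (a = f)) as [<-|Ne].
  - exists L. simpl. split; [lia|]. intros y [<-|Hy] Ny; [congruence|auto].
  - destruct Hf as [<-|Hf]; [congruence|]. destruct (IH Hf) as [L' [Hl HL']].
    exists (a :: L'). simpl. split; [lia|]. intros y [<-|Hy] Ny; [left; auto|right; auto].
Qed.

Lemma comm_inv (U : Group) (a b : U) : a ** b = b ** a -> a ** b^-1 = b^-1 ** a.
Proof. intro E. apply (comm_subgroup U a). auto. Qed.
Lemma comm_mul (U : Group) (a b c : U) : a ** b = b ** a -> a ** c = c ** a -> a ** (b ** c) = (b ** c) ** a.
Proof. intros E1 E2. apply (comm_subgroup U a); auto. Qed.

Definition Goal1 (U : Group) (nu : U -> U) (D : U -> Prop) : Prop :=
  exists w, centralizer U D w /\ ~ D w /\ nu w = w^-1 /\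
     infinite_set U (centralizer U (generated U (fun y => D y \/ y = w))).

Lemma goal_of (U : Group) nu D H w : good U nu D H -> H w -> ~ D w -> nu w = w^-1 ->
  infinite_set U (fun t => H t /\ t ** w = w ** t) -> Goal1 U nu D.
Proof.
  intros (HH & HC & _) Hw Dw Nw Hinf. exists w. split; [auto|split; [auto|split; [auto|]]].
  eapply inf_sup; [|exact Hinf]. intros t [Ht Et]. apply cent_gen'.
  intros a [Da| ->]; auto. apply (HC t Ht a Da).
Qed.
Lemma core (U : Group) nu D (lF : list U) :
  is_automorphism U nu -> (forall x, nu (nu x) = x) -> uniquely_2_divisible U ->
  (forall f, nu f = f -> In f lF) -> almost_regular U nu -> finite_set U D ->
  forall n L H, length L <= n -> good U nu D H ->
  (forall f, nu f = f -> ~ In f L -> forall y, H y -> y ** f = f ** y) -> Goal1 U nu D.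
Proof.
  intros Ha Hnn H2 HlF Har HDf n. induction n as [|n IH]; intros L H Hlen Hg Hcen.
  all: pose proof Hg as (HH & HC & Hn & Hr & Hinf).
  all: pose proof HH as (H1 & HM & HV).
  all: pose proof Ha as (Hm & _).
  all: pose proof (S_inf U nu D H Ha Hnn H2 Har Hg) as HS.
  all: set (Z := fun z => H z /\ forall y, H y -> z ** y = y ** z).
  all: destruct (classic (infinite_set U Z)) as [HZ|HZ].
  1,3: destruct (inf_diff U _ _ HS HDf) as [w [[Hw Nw] Dw]];
       apply (goal_of U nu D H w); auto;
       eapply inf_sup; [|exact HZ]; intros z [Hz Cz]; split; auto; symmetry; auto.
  all: apply NNPP in HZ.
  all: destruct (inf_diff U H (fun y => exists a b, fixed_points U nu a /\ Z b /\ y = a ** b) Hinf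
          (fin_prod U _ _ Har HZ)) as [g [Hgg Pg]].
  all: destruct (pigeon U lF (fun c s => H c /\ nu c = c /\ nu (c^-1 ** g ** s) = (c^-1 ** g ** s)^-1) _ HS)
         as [c [_ HI]].
  1,3: intros s [Hs Ns]; destruct (decomp U nu H (g ** s)) as (c & u & Nc & Nu & E & Hc & Hu); auto;
       exists c; split; [auto|split; [auto|split; [auto|]]];
       replace (c^-1 ** g ** s) with u; [auto|rewrite <- mulA, E, mulKg; reflexivity].
  all: destruct (inf_diff U _ (fun _ => False) HI (ex_intro _ nil (fun _ (f : False) => match f with end)))
         as [s0 [[[Hs0 Ns0] [Hc [Nc Ps0]]] _]].
  all: destruct (H2 s0) as [r0 [Er0 _]].
  all: assert (Nr0 : nu r0 = r0^-1) by (apply (sqrt_inv U nu); auto; rewrite Er0; auto).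
  all: assert (Hr0 : H r0) by (apply Hr; rewrite Er0; auto).
  all: set (h := g^-1 ** c).
  all: set (h' := r0^-1 ** h ** r0).
  all: set (e := (nu h')^-1 ** h').
  all: assert (Key : forall s, H s -> nu s = s^-1 -> nu (c^-1 ** g ** s) = (c^-1 ** g ** s)^-1 ->
                s^-1 ** h ** s = c^-1 ** nu g).
  1,3: intros s Hs Ns Ps; rewrite !Hm, nuV, Nc, Ns in Ps; auto;
       apply (mulg_injr U (s^-1)); unfold h; rewrite Ps; gnorm; reflexivity.
  all: set (T0 := fun t => H t /\ nu t = t^-1 /\ t ** h' = h' ** t).
  all: assert (HT0 : infinite_set U T0).
  1,3: apply (inf_image U _ T0 (fun s => r0^-1 ** s ** r0^-1) (fun t => r0 ** t ** r0) HI);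
       [|intro x; gnorm; reflexivity];
       intros s [[Hs Ns] [_ [_ Ps]]];
       pose proof (Key s Hs Ns Ps) as Ks; pose proof (Key s0 Hs0 Ns0 Ps0) as K0;
       assert (Eh : h = s0 ** (s^-1 ** h ** s) ** s0^-1) by (rewrite Ks, <- K0; gnorm; reflexivity);
       split; [|split];
       [apply HM; [apply HM|]; auto
       |rewrite !Hm, !(nuV U nu), Ns, Nr0; auto; gnorm; reflexivity
       |unfold h'; rewrite Eh at 1; rewrite <- Er0; gnorm; reflexivity].
  all: assert (HTe : forall t, T0 t -> t ** nu h' = nu h' ** t /\ t ** e = e ** t).
  1,3: intros t (Ht & Nt & Et);
       assert (E' : nu (t ** h') = nu (h' ** t)) by (rewrite Et; reflexivity);
       rewrite !Hm, Nt in E';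
       assert (C1 : t ** nu h' = nu h' ** t) by
         (pose proof (comm_inv U (nu h') (t^-1) (eq_sym E')) as C; rewrite invgK in C; symmetry; exact C);
       split; [auto|]; unfold e; apply comm_mul; [apply comm_inv|]; auto; apply Et.
  all: assert (Hh' : H h') by (unfold h', h; repeat (apply HM || apply HV); auto).
  all: assert (He : H e) by (unfold e; repeat (apply HM || apply HV); auto).
  all: assert (Ne : nu e = e^-1) by (unfold e; rewrite Hm, (nuV U nu), Hnn; auto; gnorm; reflexivity).
  all: destruct (classic (D e)) as [De|De].
  2,4: apply (goal_of U nu D H e); auto; eapply inf_sup; [|exact HT0];
       intros t Ht; split; [apply Ht|apply HTe; auto].
  all: destruct (H2 e) as [re [Ere _]].
  all: assert (Nre : nu re = re^-1) by (apply (sqrt_inv U nu); auto; rewrite Ere; auto).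
  all: assert (Hre : H re) by (apply Hr; rewrite Ere; auto).
  all: assert (Cre : forall y, H y -> y ** re = re ** y) by
         (intros y Hy; apply comm_sqrt; auto; rewrite Ere; apply (HC y Hy e De)).
  all: set (f := h' ** re^-1).
  all: assert (Enh : nu h' = h' ** e^-1) by (unfold e; gnorm; reflexivity).
  all: assert (Nf : nu f = f) by
         (unfold f; rewrite Hm, (nuV U nu), Nre, invgK, Enh, <- Ere; auto; gnorm; reflexivity).
  all: assert (Hf : H f) by (unfold f; auto).
  all: assert (Tf : forall t, T0 t -> f ** t = t ** f) by
         (intros t (Ht & Nt & Et); symmetry; unfold f; apply comm_mul; auto; apply comm_inv; auto).
  all: destruct (classic (In f L)) as [Inf|Nin].
  1: destruct L; [destruct Inf|simpl in Hlen; lia].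
  2: destruct (remove_one U f L Inf) as [L' [HL' HinL']];
     apply (IH L' (fun y => H y /\ f ** y = y ** f)); [simpl in Hlen; lia| |].
  1,4: exfalso; apply Pg; exists c, (c^-1 ** g);
       split; [unfold fixed_points; auto|split; [|gnorm; reflexivity]];
       assert (Eb : c^-1 ** g = h^-1) by (unfold h; gnorm; reflexivity);
       rewrite Eb; split; [unfold h; repeat (apply HM || apply HV); auto|];
       assert (Ch' : forall y, H y -> y ** h' = h' ** y) by
         (intros y Hy; assert (Eh' : h' = f ** re) by (unfold f; gnorm; reflexivity);
          rewrite Eh'; apply comm_mul; [apply (Hcen f Nf Nin y Hy)|auto]);
       assert (Chh : forall y, H y -> y ** h = h ** y) by
         (intros y Hy; assert (Ehh : h = r0 ** h' ** r0^-1) by (unfold h'; gnorm; reflexivity);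
          rewrite Ehh;
          assert (Cy := Ch' (r0^-1 ** y ** r0) ltac:(repeat (apply HM || apply HV); auto));
          transitivity (r0 ** ((r0^-1 ** y ** r0) ** h') ** r0^-1); [gnorm; reflexivity|];
          rewrite Cy; gnorm; reflexivity);
       intros y Hy; symmetry; apply comm_inv; auto.
  - pose proof (comm_subgroup U f) as (Cf1 & CfM & CfV).
    split; [|split; [|split; [|split]]].
    + split; [|split].
      * split; auto.
      * intros x y [Hx Cx] [Hy Cy]. split; auto.
      * intros x [Hx Cx]. split; auto.
    + intros y [Hy _]. auto.
    + intros y [Hy Cy]. split; [auto|].
      transitivity (nu (f ** y)); [rewrite Hm, Nf; reflexivity|rewrite Cy, Hm, Nf; reflexivity].
    + intros r [Hrr Crr]. split; [auto|]. apply comm_sqrt; auto.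
    + eapply inf_sup; [|exact HT0]. intros t Ht. split; [apply Ht|apply Tf; auto].
  - intros f' Nf' Nin' y [Hy Cy]. destruct (classic (f' = f)) as [->|Ne'].
    + symmetry; auto.
    + apply Hcen; [exact Nf'| |exact Hy]; intro Inf'; apply Nin'; apply HinL'; auto.
Qed.


Lemma cent_good (U : Group) nu D : is_automorphism U nu -> (forall x, nu (nu x) = x) ->
  uniquely_2_divisible U -> is_subgroup U D -> inverted_by U nu D ->
  infinite_set U (centralizer U D) -> good U nu D (centralizer U D).
Proof.
  intros Ha Hnn H2 [D1 [DM DV]] Hi Hinf. pose proof Ha as [Hm _].
  split; [|split; [|split; [|split]]]; auto.
  - split; [|split].
    + intros a Da. rewrite mul1g, mulg1. reflexivity.
    + intros x y Hx Hy a Da. symmetry. apply (comm_subgroup U a); symmetry; auto.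
    + intros x Hx a Da. symmetry. apply (comm_subgroup U a); symmetry; auto.
  - intros y Hy a Da. assert (Da' : D (nu a)) by (rewrite Hi; auto).
    pose proof (Hy _ Da') as E. apply (f_equal nu) in E. rewrite !Hm, Hnn in E. exact E.
  - intros r Hr a Da. symmetry. apply comm_sqrt; auto. symmetry. auto.
Qed.

Lemma part1_fin (U : Group) nu D : is_automorphism U nu -> (forall x, nu (nu x) = x) ->
  uniquely_2_divisible U -> almost_regular U nu -> is_subgroup U D -> inverted_by U nu D ->
  infinite_set U (centralizer U D) -> finite_set U D -> Goal1 U nu D.
Proof.
  intros Ha Hnn H2 Har HD Hi Hinf Hfin. pose proof Har as [lF HlF].
  apply (core U nu D lF Ha Hnn H2 HlF Har Hfin (length lF) lF (centralizer U D)); auto.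
  - apply cent_good; auto.
  - intros f Nf Nin. exfalso. apply Nin. apply HlF. exact Nf.
Qed.

Definition Qw (U : Group) (nu : U -> U) (D : U -> Prop) (w : U) : Prop :=
  centralizer U D w /\ ~ D w /\ nu w = w^-1 /\
     infinite_set U (centralizer U (generated U (fun y => D y \/ y = w))).
Definition Wch (U : Group) (nu : U -> U) (D : U -> Prop) : U :=
  epsilon (inhabits (one U)) (Qw U nu D).
Fixpoint chain (U : Group) (nu : U -> U) (n : nat) : U -> Prop :=
  match n with
  | 0 => fun y => y = one U
  | S m => generated U (fun y => chain U nu m y \/ y = Wch U nu (chain U nu m))
  end.

Lemma part2 (U : Group) nu : is_automorphism U nu -> (forall x, nu (nu x) = x) ->
  uniquely_2_divisible U -> almost_regular U nu -> infinite_group U ->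
  exists A : U -> Prop, is_subgroup U A /\ infinite_set U A /\ is_abelian U A /\ inverted_by U nu A.
Proof.
  intros Ha Hnn H2 Har HU. apply NNPP. intro Nex.
  assert (Hfin : forall A, is_subgroup U A -> is_abelian U A -> inverted_by U nu A -> finite_set U A).
  { intros A HA HAb HAi. apply NNPP. intro HAf. apply Nex. exists A. auto. }
  assert (Inv : forall n, is_subgroup U (chain U nu n) /\ is_abelian U (chain U nu n) /\
                 inverted_by U nu (chain U nu n) /\ infinite_set U (centralizer U (chain U nu n))).
  { induction n as [|n IH].
    - simpl. split; [|split; [|split]].
      + split; [reflexivity|split].
        * intros x y -> ->. apply mulg1.
        * intros x ->. apply invg1.
      + intros x y -> ->. reflexivity.
      + intros x ->. rewrite nu1, invg1; auto.
      + eapply inf_sup; [|exact HU]. intros y _ a ->. rewrite mulg1, mul1g. reflexivity.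
    - destruct IH as (HS & HAb & HI & HC).
      assert (Q : Qw U nu (chain U nu n) (Wch U nu (chain U nu n))).
      { unfold Wch. apply epsilon_spec. apply (part1_fin U nu); auto. }
      destruct Q as (Qc & Qn & Qi & Qinf).
      assert (Hpc : forall a b, chain U nu n a \/ a = Wch U nu (chain U nu n) ->
                   chain U nu n b \/ b = Wch U nu (chain U nu n) -> a ** b = b ** a).
      { intros a b [Ca| ->] [Cb| ->]; auto. symmetry. apply Qc; auto. }
      simpl. split; [apply gen_subgroup|split; [apply gen_abelian; auto|split]].
      + apply gen_inverted; auto. intros x [Cx| ->]; auto.
      + exact Qinf. }
  set (w := fun n => Wch U nu (chain U nu n)).
  assert (Hw : forall n, chain U nu (S n) (w n) /\ ~ chain U nu n (w n)).
  { intros n. destruct (Inv n) as (HS & HAb & HI & HC).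
    assert (Q : Qw U nu (chain U nu n) (Wch U nu (chain U nu n))).
    { unfold Wch. apply epsilon_spec. apply (part1_fin U nu); auto. }
    split; [apply gen_incl; right; reflexivity|apply Q]. }
  assert (Mono : forall n m, n <= m -> forall y, chain U nu n y -> chain U nu m y).
  { intros n m Hle. induction Hle; auto. intros y Hy. simpl. apply gen_incl. left. auto. }
  assert (Hinj : Injective w).
  { intros i j E. destruct (Nat.lt_trichotomy i j) as [Hij|[Hij|Hij]]; auto; exfalso.
    - apply (proj2 (Hw j)). rewrite <- E. apply (Mono (S i)); [lia|apply Hw].
    - apply (proj2 (Hw i)). rewrite E. apply (Mono (S j)); [lia|apply Hw]. }
  set (A := fun y => exists n, chain U nu n y).
  assert (HA : is_subgroup U A /\ is_abelian U A /\ inverted_by U nu A).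
  { split; [|split].
    - split; [exists 0; reflexivity|split].
      + intros x y [i Hx] [j Hy]. exists (Nat.max i j).
        destruct (Inv (Nat.max i j)) as ((_ & HM & _) & _).
        apply HM; [apply (Mono i)|apply (Mono j)]; auto; lia.
      + intros x [i Hx]. exists i. apply (Inv i). auto.
    - intros x y [i Hx] [j Hy]. apply (Inv (Nat.max i j)); [apply (Mono i)|apply (Mono j)]; auto; lia.
    - intros x [i Hx]. apply (Inv i). auto. }
  destruct HA as (HS & HAb & HI).
  apply Nex. exists A. split; [auto|split; [|auto]].
  intros [l Hl].
  assert (Hn : length (map w (seq 0 (S (length l)))) <= length l).
  { apply NoDup_incl_length. apply Injective_map_NoDup; [exact Hinj|apply seq_NoDup].
    intros y Hy. apply in_map_iff in Hy. destruct Hy as [k [<- _]].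
    apply Hl. exists (S k). apply Hw. }
  rewrite length_map, length_seq in Hn. lia.
Qed.

Theorem lemma3p1 (U : Group) (nu : U -> U) (D : U -> Prop) :
  infinite_group U ->
  uniquely_2_divisible U ->
  is_automorphism U nu ->
  involutory U nu ->
  almost_regular U nu ->
  is_subgroup U D ->
  is_abelian U D ->
  inverted_by U nu D ->
  infinite_set U (centralizer U D) ->
  (exists x, nu x = inv U x /\ centralizer U D x /\ ~ D x) ->
  (exists w, centralizer U D w /\ ~ D w /\ nu w = inv U w /\
     infinite_set U (centralizer U (generated U (fun y => D y \/ y = w))))
  /\
  (exists A : U -> Prop, is_subgroup U A /\ infinite_set U A /\
     is_abelian U A /\ inverted_by U nu A).
Proof.
  intros HU H2 Ha [_ Hnn] Har HD HAb Hi Hinf [x (Nx & Cx & Dx)].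
  split; [|apply part2; auto].
  destruct (classic (finite_set U D)) as [Hf|Hf].
  - apply (part1_fin U nu D); auto.
  - exists x. split; [auto|split; [auto|split; [auto|]]].
    eapply inf_sup; [|exact Hf]. intros d Dd. apply cent_gen'.
    intros a [Da| ->]; [apply HAb; auto|]. symmetry. apply Cx. auto.
Qed.
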